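(* Let $b_i,b_j\in\mathbb{Z}^2$ be linearly independent and lie in the interiors of opposite quadrants of $\mathbb{Z}^2$, let $\mathcal{B}[i,j]$ be the $2\times2$ matrix with rows $b_i,b_j$, and $c[i,j]=(c_i,c_j)\in\mathbb{C}^2$. Then the space of Puiseux polynomial solutions of $\mathrm{Horn}(\mathcal{B}[i,j],c[i,j])$ has dimension $\nu_{ij}=\min(|b_{i1}b_{j2}|,|b_{i2}b_{j1}|)$.
   Context: For an integer matrix $\mathcal{B}'$ with rows $b'_k=(b'_{k1},b'_{k2})$ and $c'$ a complex vector, $\mathrm{Horn}(\mathcal{B}',c')=D_2\langle H_1,H_2\rangle$, where $H_r=Q_r-y_rP_r$, $P_r=\prod_{k:b'_{kr}<0}\prod_{l=0}^{|b'_{kr}|-1}(b'_k\cdot\theta_y+c'_k-l)$, $Q_r=\prod_{k:b'_{kr}>0}\prod_{l=0}^{b'_{kr}-1}(b'_k\cdot\theta_y+c'_k-l)$, $b'_k\cdot\theta_y=b'_{k1}y_1\partial_{y_1}+b'_{k2}y_2\partial_{y_2}$; $D_2$ is the Weyl algebra in $y_1,y_2$. A Puiseux polynomial is a finite linear combination of monomials with complex exponents. *)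

(* Defs.v *)
From HB Require Import structures.
From mathcomp Require Import all_boot all_order all_algebra.
From mathcomp Require Import reals.
From mathcomp Require Import complex.
Set Implicit Arguments. Unset Strict Implicit. Unset Printing Implicit Defensive.
Import Order.TTheory GRing.Theory Num.Theory.
Local Open Scope ring_scope.

Section Horn.
Variable R : realType.
Local Notation C := R[i].

(* A Puiseux polynomial in y1,y2 = finite formal linear combination of
   monomials y^a = y1^(a.1) y2^(a.2), a in C^2; we represent it by its
   coefficient map a |-> coefficient of y^a. *)
Definition ppoly := (C * C)%type -> C.

Definition is_puiseux (f : ppoly) : Prop :=
  exists s : seq (C * C), forall a, f a != 0 -> a \in s.

Definition pop := ppoly -> ppoly.

Definition expo (r : 'I_2) (a : C * C) : C := if r == 0 then a.1 else a.2.
Definition unitv (r : 'I_2) : C * C := if r == 0 then (1, 0) else (0, 1).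

(* Euler operator theta_{y_r} = y_r d/dy_r : y^a |-> a_r y^a *)
Definition theta (r : 'I_2) : pop := fun f a => expo r a * f a.
(* multiplication by y_r : y^a |-> y^(a + e_r) *)
Definition mulY (r : 'I_2) : pop := fun f a => f (a.1 - (unitv r).1, a.2 - (unitv r).2).

Definition hfactor (B : 'M[int]_2) (c : 'I_2 -> C) (k : 'I_2) (l : nat) : pop :=
  fun f a => (B k 0)%:~R * theta 0 f a + (B k 1)%:~R * theta 1 f a
             + (c k - l%:R) * f a.

Definition prodop (s : seq pop) : pop := foldr (fun g h => g \o h) id s.

Definition Pop (B : 'M[int]_2) (c : 'I_2 -> C) (r : 'I_2) : pop :=
  prodop [seq hfactor B c k l | k <- [seq k <- enum 'I_2 | B k r < 0],
                                l <- iota 0 (absz (B k r))].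
Definition Qop (B : 'M[int]_2) (c : 'I_2 -> C) (r : 'I_2) : pop :=
  prodop [seq hfactor B c k l | k <- [seq k <- enum 'I_2 | 0 < B k r],
                                l <- iota 0 (absz (B k r))].

Definition Hop (B : 'M[int]_2) (c : 'I_2 -> C) (r : 'I_2) : pop :=
  fun f a => Qop B c r f a - mulY r (Pop B c r f) a.

(* Puiseux polynomial solutions of Horn(B,c) = D_2<H_1,H_2>:
   annihilated by the generators (equivalently by the whole left ideal). *)
Definition horn_sol (B : 'M[int]_2) (c : 'I_2 -> C) (f : ppoly) : Prop :=
  is_puiseux f /\ forall r a, Hop B c r f a = 0.

Definition horn_puiseux_dim (B : 'M[int]_2) (c : 'I_2 -> C) (n : nat) : Prop :=
  exists F : 'I_n -> ppoly,
    [/\ forall i, horn_sol B c (F i),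
        (forall k : 'I_n -> C,
           (forall a, \sum_(i < n) k i * F i a = 0) -> forall i, k i = 0) &
        (forall f, horn_sol B c f ->
           exists k : 'I_n -> C, forall a, f a = \sum_(i < n) k i * F i a)].

End Horn.

(* Main.v *)
Require Import Defs.
From HB Require Import structures.
From mathcomp Require Import all_boot all_order all_algebra.
From mathcomp Require Import reals.
From mathcomp Require Import complex.
From mathcomp Require Import zify ring lra.
From Stdlib Require Import ClassicalEpsilon.
Import Order.TTheory GRing.Theory Num.Theory.
Local Open Scope ring_scope.

Module LA.
Set Implicit Arguments. Unset Strict Implicit. Unset Printing Implicit Defensive.
Local Open Scope ring_scope.

Section LA.
Variable K : nzRingType.
Variables a0 b0 a1 b1 : nat.
Hypothesis lt01 : (a0 * b1 < a1 * b0)%N.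
Hypotheses (a0p : (0 < a0)%N) (b0p : (0 < b0)%N) (a1p : (0 < a1)%N) (b1p : (0 < b1)%N).

Definition edge (a b : nat) (P Q : nat * nat) : Prop :=
  P.1 = (Q.1 + a)%N /\ Q.2 = (P.2 + b)%N.

Definition phi (P : nat * nat) : nat := ((b0 + b1) * P.1 + (a0 + a1) * P.2)%N.

Definition inRect (P : nat * nat) : Prop := (P.1 < a0)%N /\ (P.2 < b1)%N.

Lemma phi_edge0 P Q : edge a0 b0 P Q -> (phi P < phi Q)%N.
Proof. rewrite /edge /phi => -[-> ->]. nia. Qed.

Lemma phi_edge1 P Q : edge a1 b1 P Q -> (phi Q < phi P)%N.
Proof. rewrite /edge /phi => -[-> ->]. nia. Qed.

Lemma rect_inj (h : nat * nat -> K) (M : nat) :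
  (forall P Q, edge a0 b0 P Q -> h P = h Q) ->
  (forall P Q, edge a1 b1 P Q -> h P = h Q) ->
  (forall P, h P != 0 -> (phi P <= M)%N) ->
  (forall P, inRect P -> h P = 0) ->
  forall P, h P = 0.
Proof.
move=> e0 e1 bnd hR.
suff: forall n P, (M - phi P < n)%N -> h P = 0.
  by move=> H P; apply: (H (M - phi P).+1).
elim=> [//|n IH] P hn.
case: (eqVneq (h P) 0) => // hP.
have pb := bnd _ hP.
case: (ltnP P.1 a0) => h1.
  case: (ltnP P.2 b1) => h2; first by apply: hR.
  pose Q := ((P.1 + a1)%N, (P.2 - b1)%N).
  have eQ : edge a1 b1 Q P by rewrite /edge /Q /=; split=> //; lia.
  have := phi_edge1 eQ => lt.
  rewrite -(e1 _ _ eQ); apply: IH.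
  case: (eqVneq (h Q) 0) => hQ.
    by move: hP; rewrite -(e1 _ _ eQ) hQ eqxx.
  have := bnd _ hQ; lia.
pose Q := ((P.1 - a0)%N, (P.2 + b0)%N).
have eQ : edge a0 b0 P Q by rewrite /edge /Q /=; split=> //; lia.
have := phi_edge0 eQ => lt.
rewrite (e0 _ _ eQ); apply: IH.
case: (eqVneq (h Q) 0) => hQ.
  by move: hP; rewrite (e0 _ _ eQ) hQ eqxx.
have := bnd _ hQ; lia.
Qed.

Inductive mreach (p : nat * nat) : nat * nat -> Prop :=
| mr0 : mreach p p
| mrD0 : forall Q P, mreach p Q -> edge a0 b0 P Q -> mreach p P
| mrD1 : forall P Q, mreach p P -> edge a1 b1 P Q -> mreach p Q.

Lemma pair_eq (P Q : nat * nat) : P.1 = Q.1 -> P.2 = Q.2 -> P = Q.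
Proof. by case: P; case: Q => /= ? ? ? ? -> ->. Qed.

Lemma mreach_cl0 p : inRect p -> forall X, mreach p X ->
  forall Q, edge a0 b0 X Q -> mreach p Q.
Proof.
move=> [hp1 hp2] X0; elim=> [|Y X mY IH eXY|Y X mY IH eYX] Q eXQ.
- move: eXQ => [h1 _]; lia.
- move: eXY eXQ => [h1 h2] [h3 h4].
  have -> : Q = Y by apply: pair_eq; lia.
  done.
- move: eYX eXQ => [h1 h2] [h3 h4].
  pose Q' := ((Q.1 + a1)%N, (Y.2 + b0)%N).
  have eYQ' : edge a0 b0 Y Q' by rewrite /edge /Q' /=; split=> //; lia.
  apply: (mrD1 (IH _ eYQ')).
  rewrite /edge /Q' /=; split=> //; lia.
Qed.

Lemma mreach_cl1 p : inRect p -> forall X, mreach p X ->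
  forall P, edge a1 b1 P X -> mreach p P.
Proof.
move=> [hp1 hp2] X0; elim=> [|Y X mY IH eXY|Y X mY IH eYX] P ePX.
- move: ePX => [_ h1]; lia.
- move: eXY ePX => [h1 h2] [h3 h4].
  pose P' := ((Y.1 + a1)%N, (P.2 + b0)%N).
  have eP'Y : edge a1 b1 P' Y by rewrite /edge /P' /=; split=> //; lia.
  apply: (mrD0 (IH _ eP'Y)).
  rewrite /edge /P' /=; split=> //; lia.
- move: eYX ePX => [h1 h2] [h3 h4].
  have -> : P = Y by apply: pair_eq; lia.
  done.
Qed.

Lemma mreach_phi p X0 : mreach p X0 -> X0 = p \/ (phi X0 < phi p)%N.
Proof.
elim=> [|Y X mY IH e|Y X mY IH e]; [by left|right|right].
- have := phi_edge0 e; case: IH => [->|]; lia.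
- have := phi_edge1 e; case: IH => [->|]; lia.
Qed.

Lemma mreach_sym p q : inRect q -> forall X, mreach p X -> mreach q X -> mreach q p.
Proof.
move=> hq X0; elim=> [//|Y X mY IH e|Y X mY IH e] mX.
- by apply: IH; apply: (mreach_cl0 hq mX e).
- by apply: IH; apply: (mreach_cl1 hq mX e).
Qed.

Lemma mreach_rect p q : inRect p -> inRect q -> mreach p q -> q = p.
Proof.
move=> hp hq mq.
have mp := mreach_sym hq mq (mr0 q).
case: (mreach_phi mq) => // h1; case: (mreach_phi mp) => // h2; lia.
Qed.


Definition Hind (p q : nat * nat) : K :=
  if excluded_middle_informative (mreach p q) then 1 else 0.

Lemma Hind_e0 p : inRect p -> forall P Q, edge a0 b0 P Q -> Hind p P = Hind p Q.
Proof.
move=> hp P Q e; rewrite /Hind.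
case: excluded_middle_informative => mP; case: excluded_middle_informative => mQ //.
- by case: mQ; apply: (mreach_cl0 hp mP e).
- by case: mP; apply: (mrD0 mQ e).
Qed.

Lemma Hind_e1 p : inRect p -> forall P Q, edge a1 b1 P Q -> Hind p P = Hind p Q.
Proof.
move=> hp P Q e; rewrite /Hind.
case: excluded_middle_informative => mP; case: excluded_middle_informative => mQ //.
- by case: mQ; apply: (mrD1 mP e).
- by case: mP; apply: (mreach_cl1 hp mQ e).
Qed.

Lemma Hind_bnd p P : Hind p P != 0 -> (phi P <= phi p)%N.
Proof.
rewrite /Hind; case: excluded_middle_informative => mP; last by rewrite eqxx.
by move=> _; case: (mreach_phi mP) => [->|]; lia.
Qed.

Lemma Hind_rect p q : inRect p -> inRect q -> Hind p q = (q == p)%:R.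
Proof.
move=> hp hq; rewrite /Hind; case: excluded_middle_informative => mq /=.
  by rewrite (mreach_rect hp hq mq) eqxx.
case: eqVneq => // e; by case: mq; rewrite e; apply: mr0.
Qed.

End LA.

End LA.
Import LA.

Module LC.
Set Implicit Arguments. Unset Strict Implicit. Unset Printing Implicit Defensive.
Local Open Scope ring_scope.

Section LC.
Variable R : realType.
Local Notation C := R[i].

Fixpoint ff (x : C) (n : nat) : C := if n is n'.+1 then x * ff (x - 1) n' else 1.

Lemma ff_eq0 x n : ff x n = 0 <-> exists2 l, (l < n)%N & x = l%:R.
Proof.
elim: n x => [|n IH] x /=.
  split=> [/eqP|[]] //; by rewrite oner_eq0.
split.
  move/eqP; rewrite mulf_eq0 => /orP[/eqP->|/eqP/IH[l hl e]].
    by exists 0%N.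
  by exists l.+1 => //; rewrite -natr1 -e subrK.
move=> [[|l] hl e]; apply/eqP; rewrite mulf_eq0; apply/orP.
  by left; rewrite e.
by right; apply/eqP/IH; exists l => //; rewrite e -natr1 addrK.
Qed.

Lemma ff_nat n A : ff (n%:R + A%:R) A * n`!%:R = (n + A)`!%:R.
Proof.
elim: A => [|A IH] /=; first by rewrite mul1r addn0.
have -> : n%:R + A.+1%:R - 1 = n%:R + A%:R :> C by rewrite -natr1; ring.
rewrite -mulrA IH addnS factS natrM.
by rewrite -addnS natrD.
Qed.

Lemma ff_neq0 x n : (forall m : nat, x != m%:R) -> ff x n != 0.
Proof. by move=> hx; apply/eqP => /ff_eq0 [l _ e]; move: (hx l); rewrite e eqxx. Qed.

Definition natc (P : nat * nat) : C * C := (P.1%:R, P.2%:R).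

Lemma natc_inj : injective natc.
Proof.
move=> [a b] [c d] [/eqP + /eqP]; rewrite !eqr_nat => /eqP -> /eqP -> //.
Qed.

Definition natpair (P : C * C) : option (nat * nat) :=
  match excluded_middle_informative (exists n, P = natc n) with
  | left e => Some (proj1_sig (constructive_indefinite_description _ e))
  | right _ => None
  end.

Variant natpair_spec (P : C * C) : option (nat * nat) -> Type :=
| NPSome n of P = natc n : natpair_spec P (Some n)
| NPNone of (forall n, P <> natc n) : natpair_spec P None.

Lemma natpairP P : natpair_spec P (natpair P).
Proof.
rewrite /natpair; case: excluded_middle_informative => e.
  case: constructive_indefinite_description => n hn /=; exact: NPSome.
by apply: NPNone => n hn; apply: e; exists n.
Qed.

Lemma natpair_natc n : natpair (natc n) = Some n.
Proof. by case: natpairP => [m /natc_inj ->|/(_ n)]. Qed.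

Definition fct (n : nat * nat) : C := (n.1`! * n.2`!)%:R.

Lemma fct_neq0 n : fct n != 0.
Proof. by rewrite /fct pnatr_eq0 muln_eq0 !negb_or -!lt0n !fact_gt0. Qed.

Definition Gof (h : nat * nat -> C) (P : C * C) : C :=
  if natpair P is Some n then h n / fct n else 0.

Lemma Gof_natc h n : Gof h (natc n) = h n / fct n.
Proof. by rewrite /Gof natpair_natc. Qed.

Definition UE (A B : nat) (g : C * C -> C) : Prop :=
  forall P : C * C, ff P.1 A * g P = ff (P.2 + B%:R) B * g (P.1 - A%:R, P.2 + B%:R).

Lemma UE_ext A B g g' : (forall P, g P = g' P) -> UE A B g -> UE A B g'.
Proof. by move=> e u P; rewrite -!e. Qed.

Lemma UE_Gof A B h : (forall P Q, edge A B P Q -> h P = h Q) -> UE A B (Gof h).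
Proof.
move=> eh P; case: (natpairP P) => [n ->|hn].
  rewrite Gof_natc /=.
  case: (leqP A n.1) => hA.
    set m := ((n.1 - A)%N, (n.2 + B)%N).
    have -> : (n.1%:R - A%:R, n.2%:R + B%:R) = natc m.
      by rewrite /natc /m /= natrB // natrD.
    rewrite Gof_natc.
    have -> : h m = h n by symmetry; apply: eh; rewrite /edge /m /=; split=> //; lia.
    have [k ek] : exists k, n.1 = (k + A)%N by exists (n.1 - A)%N; lia.
    have e1 := ff_nat k A; have e2 := ff_nat n.2 B.
    rewrite /fct /m /= ek addnK !natrM -e1 -e2 natrD.
    have f1 : ff (k%:R + A%:R) A != 0.
      by apply/eqP => h0; move: e1; rewrite h0 mul0r => /esym/eqP; rewrite pnatr_eq0 eqn0Ngt fact_gt0.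
    have f2 : ff (n.2%:R + B%:R) B != 0.
      by apply/eqP => h0; move: e2; rewrite h0 mul0r => /esym/eqP; rewrite pnatr_eq0 eqn0Ngt fact_gt0.
    have k1 : (k`!)%:R != 0 :> C by rewrite pnatr_eq0 -lt0n fact_gt0.
    have k2 : (n.2`!)%:R != 0 :> C by rewrite pnatr_eq0 -lt0n fact_gt0.
    field; rewrite ?f1 ?f2 ?k1 ?k2 ?mulf_neq0 //.
  have -> : ff n.1%:R A = 0 by apply/ff_eq0; exists n.1.
  rewrite mul0r /Gof; case: (natpairP (n.1%:R - A%:R, n.2%:R + B%:R)) => [m [e1 _]|_]; last by rewrite mulr0.
  exfalso; move: e1 => /(congr1 (fun x => x + A%:R)); rewrite subrK -natrD => /eqP.
  rewrite eqr_nat => /eqP; lia.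
rewrite /Gof; case: (natpairP P) => [n e|_]; first by case: (hn n).
rewrite mulr0; case: (natpairP (P.1 - A%:R, P.2 + B%:R)) => [m [e1 e2]|_]; last by rewrite mulr0.
case: (leqP B m.2) => hB.
  exfalso; apply: (hn ((m.1 + A)%N, (m.2 - B)%N)).
  rewrite /natc /= natrD natrB // -e1 -e2 addrK subrK.
  by case: P {hn e1 e2}.
have -> : ff (P.2 + B%:R) B = 0 by apply/ff_eq0; exists m.2; rewrite // e2.
by rewrite mul0r.
Qed.


Lemma no_inj (T : eqType) (s : seq T) (Q : nat -> T) :
  injective Q -> (forall k, Q k \in s) -> False.
Proof.
move=> iQ hs.
have : (size [seq Q k | k <- iota 0 (size s).+1] <= size s)%N.
  apply: uniq_leq_size; first by rewrite map_inj_uniq // iota_uniq.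
  by move=> x /mapP[k _ ->].
by rewrite size_map size_iota ltnn.
Qed.

Lemma natr_mulI (A : nat) : (0 < A)%N -> injective (fun k : nat => (k * A)%:R : C).
Proof.
move=> hA k j /eqP; rewrite eqr_nat eqn_pmul2r // => /eqP //.
Qed.

Lemma UE_support A B g : (0 < A)%N -> (0 < B)%N ->
  (exists s : seq (C * C), forall P, g P != 0 -> P \in s) -> UE A B g ->
  forall P, g P != 0 -> exists n, P = natc n.
Proof.
move=> hA hB [s hs] u P gP.
have v2 : exists n2 : nat, P.2 = n2%:R.
  case: (excluded_middle_informative (exists n2 : nat, P.2 = n2%:R)) => // hv.
  pose Pk (k : nat) := (P.1 + (k * A)%:R, P.2 - (k * B)%:R).
  have nk : forall k (m : nat), (Pk k).2 != m%:R.
    move=> k m; apply/eqP => e; apply: hv; exists (m + k * B)%N.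
    by rewrite natrD -e /Pk /= subrK.
  have gk : forall k, g (Pk k) != 0.
    elim=> [|k IH].
      by rewrite /Pk /= mul0n subr0 addr0 -surjective_pairing.
    have := u (Pk k.+1).
    have -> : ((Pk k.+1).1 - A%:R, (Pk k.+1).2 + B%:R) = Pk k.
      by rewrite /Pk /= mulSn natrD; congr (_, _); ring.
    have -> : (Pk k.+1).2 + B%:R = (Pk k).2 by rewrite /Pk /= mulSn natrD; ring.
    move=> e; apply/eqP => h0; move: e; rewrite h0 mulr0 => /esym/eqP.
    by rewrite mulf_eq0 (negbTE (ff_neq0 _ (nk k))) (negbTE IH).
  exfalso; apply: (no_inj (Q := Pk)); last by move=> k; apply: hs.
  by move=> k j /(congr1 fst) /= /addrI /natr_mulI; apply.
have v1 : exists n1 : nat, P.1 = n1%:R.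
  case: (excluded_middle_informative (exists n1 : nat, P.1 = n1%:R)) => // hv.
  pose Pk (k : nat) := (P.1 - (k * A)%:R, P.2 + (k * B)%:R).
  have nk : forall k (m : nat), (Pk k).1 != m%:R.
    move=> k m; apply/eqP => e; apply: hv; exists (m + k * A)%N.
    by rewrite natrD -e /Pk /= subrK.
  have gk : forall k, g (Pk k) != 0.
    elim=> [|k IH].
      by rewrite /Pk /= mul0n subr0 addr0 -surjective_pairing.
    have := u (Pk k).
    have -> : ((Pk k).1 - A%:R, (Pk k).2 + B%:R) = Pk k.+1.
      by rewrite /Pk /= mulSn natrD; congr (_, _); ring.
    move=> e; apply/eqP => h0; move: e; rewrite h0 mulr0 => /eqP.
    by rewrite mulf_eq0 (negbTE (ff_neq0 _ (nk k))) (negbTE IH).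
  exfalso; apply: (no_inj (Q := Pk)); last by move=> k; apply: hs.
  by move=> k j /(congr1 fst) /= /addrI /oppr_inj /natr_mulI; apply.
case: v1 v2 => [n1 e1] [n2 e2]; exists (n1, n2).
by rewrite /natc /= -e1 -e2 -surjective_pairing.
Qed.

Definition hof (g : C * C -> C) (n : nat * nat) : C := g (natc n) * fct n.

Lemma UE_edge A B g : UE A B g -> forall P Q, edge A B P Q -> hof g P = hof g Q.
Proof.
move=> u [p1 p2] [q1 q2] [/= -> ->].
have := u (natc ((q1 + A)%N, p2)).
rewrite /natc /= natrD addrK -natrD => e.
have f1 := ff_nat q1 A; have f2 := ff_nat p2 B.
rewrite /hof /fct /natc /= !natrM -f1 -f2.
transitivity (ff (q1%:R + A%:R) A * g ((q1 + A)%N%:R, p2%:R) * ((q1)`!%:R * (p2)`!%:R)).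
  ring.
rewrite -natrD e natrD; ring.
Qed.

End LC.

End LC.
Import LC.

Module LB.
Set Implicit Arguments. Unset Strict Implicit. Unset Printing Implicit Defensive.
Local Open Scope ring_scope.

Lemma ord0E : (ord0 : 'I_2) = 0. Proof. by apply/val_inj. Qed.
Lemma ord1E : (lift ord0 ord0 : 'I_2) = 1. Proof. by apply/val_inj. Qed.

Lemma prod_I2 (K : comNzRingType) (P : pred 'I_2) (F : 'I_2 -> K) :
  \prod_(k <- [seq k <- enum 'I_2 | P k]) F k = (if P 0 then F 0 else 1) * (if P 1 then F 1 else 1).
Proof.
by rewrite big_filter big_mkcond big_enum /= big_ord_recl big_ord_recl big_ord0 mulr1 /= ord0E ord1E.
Qed.

Lemma det2 (B : 'M[int]_2) : \det B = B 0 0 * B 1 1 - B 0 1 * B 1 0.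
Proof.
rewrite (expand_det_row B 0) big_ord_recl big_ord_recl big_ord0 addr0 /cofactor.
rewrite !det_mx11 !mxE /= ord0E ord1E.
have -> : lift 1 0 = 0 :> 'I_2 by apply/val_inj.
rewrite /= expr0 expr1; ring.
Qed.

Lemma I2_cases (r : 'I_2) : r = 0 \/ r = 1.
Proof. case: r => [[|[|n]] hr]; [left|right|by []]; exact: val_inj. Qed.

Section LB.
Variable R : realType.
Local Notation C := R[i].
Variables (B : 'M[int]_2) (c : 'I_2 -> C).

Definition xk (k : 'I_2) (a : C * C) : C := (B k 0)%:~R * a.1 + (B k 1)%:~R * a.2 + c k.

Lemma hfactorE k l (f : ppoly R) a : hfactor B c k l f a = (xk k a - l%:R) * f a.
Proof. by rewrite /hfactor /theta /expo /xk /=; ring. Qed.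

Lemma foldr_comp (T : Type) (s : seq T) (g : T -> pop R) (m : T -> C * C -> C) (h : pop R) :
  (forall t f a, g t f a = m t a * f a) ->
  forall f a, foldr (fun g h => g \o h) h [seq g t | t <- s] f a = (\prod_(t <- s) m t a) * h f a.
Proof.
move=> hg; elim: s => [|t s IH] f a /=; first by rewrite big_nil mul1r.
by rewrite hg IH big_cons mulrA.
Qed.

Lemma prod_iota_ff (x : C) s A : \prod_(l <- iota s A) (x - l%:R) = ff (x - s%:R) A.
Proof.
elim: A s => [|A IH] s /=; first by rewrite big_nil.
by rewrite big_cons IH -natr1 opprD addrA.
Qed.

Lemma prodop_hf (ks : seq 'I_2) (n : 'I_2 -> nat) f a :
  prodop [seq hfactor B c k l | k <- ks, l <- iota 0 (n k)] f a =
  (\prod_(k <- ks) ff (xk k a) (n k)) * f a.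
Proof.
elim: ks f a => [|k ks IH] f a /=; first by rewrite big_nil mul1r.
rewrite /prodop foldr_cat.
rewrite (@foldr_comp _ (iota 0 (n k)) (hfactor B c k) (fun l a => xk k a - l%:R)); last by move=> *; apply: hfactorE.
by rewrite -/(prodop _) IH big_cons prod_iota_ff subr0 mulrA.
Qed.

Definition shift (r : 'I_2) (a : C * C) : C * C :=
  (a.1 - (unitv R r).1, a.2 - (unitv R r).2).

Lemma xk_shift k r a : xk k (shift r a) = xk k a - (B k r)%:~R.
Proof.
rewrite /xk /shift /unitv; case: (I2_cases r) => ->; rewrite /=; ring.
Qed.

Lemma HopE r f a : Hop B c r f a =
  (\prod_(k <- [seq k <- enum 'I_2 | 0 < B k r]) ff (xk k a) (absz (B k r))) * f a -
  (\prod_(k <- [seq k <- enum 'I_2 | B k r < 0]) ff (xk k (shift r a)) (absz (B k r))) * f (shift r a).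
Proof. by rewrite /Hop /Qop /Pop /mulY !prodop_hf. Qed.


Lemma sign_cases (x y : int) : x * y < 0 -> (0 < x /\ y < 0) \/ (x < 0 /\ 0 < y).
Proof.
move=> h.
case: (ltrgtP x 0) => hx; case: (ltrgtP y 0) => hy; try by [left|right].
- by move: h; rewrite ltNge ltW // nmulr_rgt0.
- by move: h; rewrite hy mulr0 ltxx.
- by move: h; rewrite ltNge ltW // mulr_gt0.
- by move: h; rewrite hy mulr0 ltxx.
all: by move: h; rewrite hx mul0r ltxx.
Qed.

Definition Xm (a : C * C) : C * C := (xk 0 a, xk 1 a).
Variable Y : C * C -> C * C.
Hypotheses (XY : forall P, Xm (Y P) = P) (YX : forall a, Y (Xm a) = a).

Definition UEd (A Bb : nat) (g : C * C -> C) (P : C * C) : C :=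
  ff P.1 A * g P - ff (P.2 + Bb%:R) Bb * g (P.1 - A%:R, P.2 + Bb%:R).

Lemma UE_iff A Bb g : UE A Bb g <-> forall P, UEd A Bb g P = 0.
Proof.
by split=> h P; [rewrite /UEd (h P) subrr|apply/eqP; rewrite -subr_eq0; apply/eqP; exact: (h P)].
Qed.

Lemma hop_UE r (f : ppoly R) : B 0 r * B 1 r < 0 ->
  (forall a, Hop B c r f a = 0) <-> UE (absz (B 0 r)) (absz (B 1 r)) (fun P => f (Y P)).
Proof.
move=> hs; rewrite UE_iff.
set A := absz (B 0 r); set Bb := absz (B 1 r).
have fY : forall a, f a = f (Y (Xm a)) by move=> a; rewrite YX.
case: (sign_cases hs) => [[p0 n1]|[n0 p1]].
- have E0 : (B 0 r)%:~R = A%:R :> C by rewrite -(gez0_abs (ltW p0)) pmulrn.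
  have E1 : (B 1 r)%:~R = - Bb%:R :> C.
    by rewrite -[B 1 r]opprK -(ltz0_abs n1) mulrNz pmulrn.
  have H : forall a, Hop B c r f a = UEd A Bb (fun P => f (Y P)) (Xm a).
    move=> a; rewrite HopE !prod_I2 p0 n1 (lt_gtF p0) (lt_gtF n1) mul1r mulr1.
    rewrite /UEd /= xk_shift E1 opprK fY [f (shift _ _)]fY.
    congr (_ * _ - _ * f (Y _)); rewrite /Xm !xk_shift E0 E1 opprK //.
  split=> h P.
    by rewrite -[P]XY -H h.
  by rewrite H h.
- have E0 : (B 0 r)%:~R = - A%:R :> C.
    by rewrite -[B 0 r]opprK -(ltz0_abs n0) mulrNz pmulrn.
  have E1 : (B 1 r)%:~R = Bb%:R :> C by rewrite -(gez0_abs (ltW p1)) pmulrn.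
  have H : forall a, Hop B c r f a = - UEd A Bb (fun P => f (Y P)) (Xm (shift r a)).
    move=> a; rewrite HopE !prod_I2 p1 n0 (lt_gtF p1) (lt_gtF n0) mul1r mulr1.
    rewrite /UEd /= !xk_shift E0 E1 opprK fY [f (shift _ _)]fY.
    have -> : (xk 0 a + A%:R - A%:R, xk 1 a - Bb%:R + Bb%:R) = Xm a.
      by rewrite /Xm addrK subrK.
    rewrite /Xm !xk_shift E0 E1 opprK subrK; ring.
  split=> h P.
    pose a := Y (P.1 - A%:R, P.2 + Bb%:R).
    have ha : Xm (shift r a) = P.
      have : Xm a = (P.1 - A%:R, P.2 + Bb%:R) by rewrite /a XY.
      rewrite /Xm => -[e0' e1'].
      by rewrite !xk_shift e0' e1' E0 E1 opprK subrK addrK -surjective_pairing.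
    by rewrite -ha; apply/eqP; rewrite -oppr_eq0 -H h.
  by rewrite H h oppr0.
Qed.

End LB.

End LB.
Import LB.

Module LD.
Set Implicit Arguments. Unset Strict Implicit. Unset Printing Implicit Defensive.
Local Open Scope ring_scope.

Section LD.
Variable R : realType.
Local Notation C := R[i].
Variables a0 b0 a1 b1 : nat.
Hypothesis lt01 : (a0 * b1 < a1 * b0)%N.
Hypotheses (a0p : (0 < a0)%N) (b0p : (0 < b0)%N) (a1p : (0 < a1)%N) (b1p : (0 < b1)%N).
Variables (X Y : C * C -> C * C).
Hypotheses (XY : forall P, X (Y P) = P) (YX : forall a, Y (X a) = a).
Variable sol : ppoly R -> Prop.
Hypothesis sol_iff : forall f, sol f <->
  is_puiseux f /\ UE a0 b0 (fun P => f (Y P)) /\ UE a1 b1 (fun P => f (Y P)).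

Local Notation phi := (phi a0 b0 a1 b1).
Local Notation inRect := (inRect a0 b1).
Local Notation Hind := (Hind C a0 b0 a1 b1).
Local Notation natc := (natc R).
Local Notation fct := (fct R).

Definition pt (i : 'I_(a0 * b1)) : nat * nat := ((i %/ b1)%N, (i %% b1)%N).

Lemma pt_rect i : inRect (pt i).
Proof. by split; rewrite /pt /= ?ltn_divLR ?ltn_pmod. Qed.

Lemma pt_inj : injective pt.
Proof.
move=> i j [e1 e2]; apply: val_inj => /=.
by rewrite [LHS](divn_eq _ b1) [RHS](divn_eq _ b1) e1 e2.
Qed.

Lemma rect_pt q : inRect q -> exists i, pt i = q.
Proof.
case: q => q1 q2 [/= h1 h2].
have hi : (q1 * b1 + q2 < a0 * b1)%N by nia.
exists (Ordinal hi); rewrite /pt /=.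
by rewrite divnMDl // modnMDl divn_small // modn_small // addn0.
Qed.

Lemma phi_pt i : (phi (pt i) <= phi (a0, b1))%N.
Proof.
have := pt_rect i; rewrite /LA.phi; case: (pt i) => x y [/= h1 h2].
apply: leq_add; apply: leq_mul => //; exact: ltnW.
Qed.

Definition Fb (i : 'I_(a0 * b1)) : ppoly R := fun a => Gof (Hind (pt i)) (X a).

Lemma Fb_sol i : sol (Fb i).
Proof.
apply/sol_iff; split; last split.
- pose M := phi (pt i).
  exists [seq Y (natc n) | n <- [seq (x, y) | x <- iota 0 M.+1, y <- iota 0 M.+1]].
  move=> a; rewrite /Fb /Gof; case: (natpairP (X a)) => [n e|]; last by rewrite eqxx.
  move=> hn.
  have hH : Hind (pt i) n != 0 by apply: contraNneq hn => ->; rewrite mul0r.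
  have hb := Hind_bnd lt01 a0p b0p a1p b1p hH.
  have h1 : (n.1 <= M)%N by apply: leq_trans hb; rewrite /LA.phi; nia.
  have h2 : (n.2 <= M)%N by apply: leq_trans hb; rewrite /LA.phi; nia.
  rewrite -[a]YX e; apply: map_f.
  have -> : n = (n.1, n.2) by case: n {e hn hH hb h1 h2}.
  by apply: allpairs_f; rewrite mem_iota /= add0n ltnS.
- apply: (UE_ext (g := Gof (Hind (pt i)))); first by move=> P; rewrite /Fb XY.
  by apply: UE_Gof; apply: (Hind_e0 C lt01 a0p b0p a1p b1p (pt_rect i)).
- apply: (UE_ext (g := Gof (Hind (pt i)))); first by move=> P; rewrite /Fb XY.
  by apply: UE_Gof; apply: (Hind_e1 C lt01 a0p b0p a1p b1p (pt_rect i)).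
Qed.

Lemma Fb_at i j : Fb i (Y (natc (pt j))) = (pt j == pt i)%:R / fct (pt j).
Proof. by rewrite /Fb XY Gof_natc (Hind_rect C lt01 a0p b0p a1p b1p (pt_rect i) (pt_rect j)). Qed.

Lemma Fb_indep (k : 'I_(a0 * b1) -> C) :
  (forall a, \sum_(i < a0 * b1) k i * Fb i a = 0) -> forall i, k i = 0.
Proof.
move=> h j; have := h (Y (natc (pt j))).
rewrite (bigD1 j) //= big1 => [|i hij]; last first.
  by rewrite Fb_at (inj_eq pt_inj) eq_sym (negbTE hij) mul0r mulr0.
rewrite Fb_at eqxx mul1r addr0 => /eqP; rewrite mulf_eq0 invr_eq0 (negbTE (fct_neq0 _ _)) orbF.
by move/eqP.
Qed.


Lemma Fb_span f : sol f ->
  exists k : 'I_(a0 * b1) -> C, forall a, f a = \sum_(i < a0 * b1) k i * Fb i a.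
Proof.
move=> /sol_iff [[sf hsf] [u0 u1]].
pose g := fun P => f (Y P).
have sg : exists s : seq (C * C), forall P, g P != 0 -> P \in s.
  by exists (map X sf) => P gP; rewrite -[P]XY; apply: map_f; exact: hsf.
have [sgl hsg] := sg.
pose hf := hof g.
have e0 := UE_edge u0; have e1 := UE_edge u1.
pose k i := hf (pt i).
exists k.
pose h' n := hf n - \sum_(i < a0 * b1) k i * Hind (pt i) n.
have h'0 : forall n, h' n = 0.
  refine (@rect_inj _ _ _ _ _ lt01 a0p b0p a1p b1p h' (\max_(n <- pmap (@natpair R) sgl) phi n + phi (a0, b1))%N _ _ _ _).
  - move=> P Q e; rewrite /h' /hf (e0 _ _ e); congr (_ - _); apply: eq_bigr => i _.
    by rewrite (Hind_e0 C lt01 a0p b0p a1p b1p (pt_rect i) e).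
  - move=> P Q e; rewrite /h' /hf (e1 _ _ e); congr (_ - _); apply: eq_bigr => i _.
    by rewrite (Hind_e1 C lt01 a0p b0p a1p b1p (pt_rect i) e).
  - move=> P; rewrite /h'; case: (eqVneq (hf P) 0) => [hP|hP].
      rewrite hP sub0r oppr_eq0 => hs.
      have [i hi] : exists i, Hind (pt i) P != 0.
        case: (boolP [exists i, Hind (pt i) P != 0]) => [/existsP //|/existsPn hn].
        move: hs; rewrite big1 ?eqxx // => i _.
        by have := hn i; rewrite negbK => /eqP ->; rewrite mulr0.
      have := Hind_bnd lt01 a0p b0p a1p b1p hi; have := phi_pt i; lia.
    move=> _; have gP : g (natc P) != 0.
      by apply: contraNneq hP; rewrite /hf /hof => ->; rewrite mul0r.
    have : P \in pmap (@natpair R) sgl.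
      by rewrite mem_pmap -(natpair_natc R P); apply: map_f; apply: hsg.
    move=> hm; have := @leq_bigmax_seq _ _ xpredT (fun n => phi n) P hm isT; idtac.
    by move=> hh; apply: leq_trans hh _; apply: leq_addr.
  - move=> P hP; have [j <-] := rect_pt hP.
    rewrite /h' (bigD1 j) //= big1 => [|i hij].
      by rewrite (Hind_rect C lt01 a0p b0p a1p b1p (pt_rect j) (pt_rect j)) eqxx mulr1 addr0 subrr.
    rewrite (Hind_rect C lt01 a0p b0p a1p b1p (pt_rect i) (pt_rect j)).
    by rewrite (inj_eq pt_inj) eq_sym (negbTE hij) mulr0.
move=> a.
have fa : f a = g (X a) by rewrite /g YX.
rewrite fa /Fb /Gof.
case: (natpairP (X a)) => [n e|hn].
  have : hf n = \sum_i k i * Hind (pt i) n.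
    by apply/eqP; rewrite -subr_eq0; apply/eqP; apply: h'0.
  rewrite /hf /hof -e => E.
  have -> : g (X a) = (\sum_i k i * Hind (pt i) n) / fct n.
    by rewrite -E mulfK // fct_neq0.
  by rewrite mulr_suml; apply: eq_bigr => i _; rewrite mulrA.
have -> : g (X a) = 0.
  apply/eqP; apply/negP => /negP gX.
  by have [n en] := UE_support a0p b0p sg u0 gX; case: (hn n).
by rewrite big1 // => i _; rewrite mulr0.
Qed.

Lemma core : exists F : 'I_(a0 * b1) -> ppoly R,
  [/\ forall i, sol (F i),
      (forall k : 'I_(a0 * b1) -> C,
         (forall a, \sum_(i < a0 * b1) k i * F i a = 0) -> forall i, k i = 0) &
      (forall f, sol f ->
         exists k : 'I_(a0 * b1) -> C, forall a, f a = \sum_(i < a0 * b1) k i * F i a)].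
Proof. exists Fb; split; [exact: Fb_sol|exact: Fb_indep|exact: Fb_span]. Qed.

End LD.

End LD.
Import LD.

Lemma int_sgn (z : int) : z != 0 -> z = (absz z)%:Z \/ z = - (absz z)%:Z.
Proof.
move=> hz; case: (ltrgtP z 0) => h.
- by right; rewrite (ltz0_abs h) opprK.
- by left; rewrite (gez0_abs (ltW h)).
- by move: hz; rewrite h eqxx.
Qed.

Lemma det_ne (B : 'M[int]_2) : \det B != 0 ->
  (forall k r, B k r != 0) ->
  B 0 0 * B 1 0 < 0 -> B 0 1 * B 1 1 < 0 ->
  muln (absz (B 0 0)) (absz (B 1 1)) != muln (absz (B 0 1)) (absz (B 1 0)).
Proof.
move=> hdet hnz s0 s1; apply/eqP => E; move/eqP: hdet; apply.
rewrite det2.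
move: s0 s1 E.
have [->|->] := @int_sgn (B 0 0) (hnz 0 0); have [->|->] := @int_sgn (B 1 0) (hnz 1 0);
have [->|->] := @int_sgn (B 0 1) (hnz 0 1); have [->|->] := @int_sgn (B 1 1) (hnz 1 1);
rewrite ?abszN ?absz_nat => s0 s1 E; nia.
Qed.

Theorem lemma6p5 (R : realType) (B : 'M[int]_2) (c : 'I_2 -> R[i]) :
  \det B != 0 ->
  (forall k r, B k r != 0) ->
  B 0 0 * B 1 0 < 0 -> B 0 1 * B 1 1 < 0 ->
  horn_puiseux_dim B c
    (minn (absz (B 0 0 * B 1 1)) (absz (B 0 1 * B 1 0))).
Proof.
move=> hdet hnz s0 s1.
have hne := @det_ne B hdet hnz s0 s1.
set a0 := absz (B 0 0) in hne *; set b0 := absz (B 1 0) in hne *.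
set a1 := absz (B 0 1) in hne *; set b1 := absz (B 1 1) in hne *.
have a0p : (0 < a0)%N by rewrite absz_gt0.
have b0p : (0 < b0)%N by rewrite absz_gt0.
have a1p : (0 < a1)%N by rewrite absz_gt0.
have b1p : (0 < b1)%N by rewrite absz_gt0.
pose d : R[i] := (\det B)%:~R.
have dE : d = (B 0 0)%:~R * (B 1 1)%:~R - (B 0 1)%:~R * (B 1 0)%:~R.
  by rewrite /d det2 intrB !intrM.
have dn0 : (B 0 0)%:~R * (B 1 1)%:~R - (B 0 1)%:~R * (B 1 0)%:~R != 0 :> R[i].
  by rewrite -dE intr_eq0.
pose Y (P : R[i] * R[i]) : R[i] * R[i] :=
  (((B 1 1)%:~R * (P.1 - c 0) - (B 0 1)%:~R * (P.2 - c 1)) / d,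
   ((B 0 0)%:~R * (P.2 - c 1) - (B 1 0)%:~R * (P.1 - c 0)) / d).
have XY : forall P, Xm B c (Y P) = P.
  move=> [p1 p2]; rewrite /Xm /xk /Y /= dE; congr (_, _); field; exact: dn0.
have YX : forall a, Y (Xm B c a) = a.
  move=> [p1 p2]; rewrite /Xm /xk /Y /= dE; congr (_, _); field; exact: dn0.
have HU : forall f r, B 0 r * B 1 r < 0 ->
    (forall a, Hop B c r f a = 0) <-> UE (absz (B 0 r)) (absz (B 1 r)) (fun P => f (Y P)).
  by move=> f r hs; apply: hop_UE.
have sol_iff : forall f, horn_sol B c f <->
    is_puiseux f /\ UE a0 b0 (fun P => f (Y P)) /\ UE a1 b1 (fun P => f (Y P)).
  move=> f; rewrite /horn_sol; split.
    by move=> [hp hh]; split=> //; split; [apply/(HU f 0 s0)|apply/(HU f 1 s1)].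
  move=> [hp [h0 h1]]; split=> // r; case: (I2_cases r) => ->.
    exact/(HU f 0 s0).
  exact/(HU f 1 s1).
rewrite !abszM -/a0 -/b0 -/a1 -/b1.
case: (ltngtP (a0 * b1) (a1 * b0)) => hlt.
-
  exact: (core hlt a0p b0p a1p b1p XY YX sol_iff).
-
  have sol_iff' : forall f, horn_sol B c f <->
      is_puiseux f /\ UE a1 b1 (fun P => f (Y P)) /\ UE a0 b0 (fun P => f (Y P)).
    by move=> f; rewrite sol_iff; split=> -[? [? ?]].
  exact: (core hlt a1p b1p a0p b0p XY YX sol_iff').
- by move: hne; rewrite hlt eqxx.
Qed.
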